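(* Consider the standard voter model in the dynamic graph model with exactly two opinions ($\kappa=2$), and let $\phi_i$ be a lower bound on the conductance of the graph used in round $i$. Fix an arbitrary $\hat t\ge 0$ and the set $s_{\hat t}$. Let $\tau^*=\min\{t' : \sum_{i=\hat t}^{t'}\phi_i\ge 129\cdot\mathrm{vol}(s_{\hat t})/d_{\min}\}$. Then $\Pr(T\le\tau^*+\hat t)\ge 1/2$. In particular, if the graph is static with conductance $\phi$, then $\Pr\big(T\le \frac{129\,\mathrm{vol}(s_{\hat t})}{\phi\, d_{\min}}+\hat t\big)\ge 1/2$.
   Context: Graphs are undirected on vertex set $V=\{1,\dots,n\}$; $d_u$ is the (time-invariant) degree of $u$, $d_{\min}$ the minimum degree, $m$ the number of edges, $\mathrm{vol}(U)=\sum_{u\in U}d_u$. Conductance: $\phi(G)=\min\{\sum_{u\in U}\lambda_u/\mathrm{vol}(U): U\subset V,\ 0<\mathrm{vol}(U)\le m\}$, where $\lambda_u$ is the number of neighbours of $u$ outside $U$. Dynamic graph model: an adversary chooses $G_1,G_2,\dots$ on $V$, knowing past opinions, such that node $j$ has degree $d_j$ in every $G_t$ and $G_t$ has conductance at least $\phi_t$, with $(\phi_t)$ fixed in advance. Standard voter model: in each round every node independently picks a uniformly random neighbour in the current graph and with probability $1/2$ adopts its opinion (as at the start of the round). $V_t^{(i)}$ is the set of nodes with opinion $i$ after $t$ rounds; $S_t$ is the one of $V_t^{(0)},V_t^{(1)}$ with smaller volume, $s_t$ a fixed value of it. $T$ is the consensus time, the first round after which all nodes hold the same opinion (equivalently $S_T=\emptyset$).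 *)

(* Defs.v *)
From mathcomp Require Import all_boot all_order all_algebra.
Set Implicit Arguments. Unset Strict Implicit. Unset Printing Implicit Defensive.
Import Order.TTheory GRing.Theory Num.Theory.
Local Open Scope ring_scope.

Section Voter.
Variable n : nat.

(* opinion configuration: opinion 0 = false, opinion 1 = true *)
Definition config := {ffun 'I_n -> bool}.

Definition nbrs (G : rel 'I_n) (u : 'I_n) : {set 'I_n} := [set v | G u v].

Definition is_dgraph (d : 'I_n -> nat) (G : rel 'I_n) : Prop :=
  [/\ forall u v, G u v = G v u, forall u, ~~ G u u & forall u, #|nbrs G u| = d u].

Definition vol (d : 'I_n -> nat) (U : {set 'I_n}) : nat := \sum_(u in U) d u.

Definition nedges (G : rel 'I_n) : nat :=
  #|[set e : 'I_n * 'I_n | G e.1 e.2 && (e.1 < e.2)%N]|.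

Definition lam (G : rel 'I_n) (U : {set 'I_n}) (u : 'I_n) : nat :=
  #|[set v | G u v & v \notin U]|.

(* conductance: min over U with 0 < vol U <= m of (sum_{u in U} lambda_u)/vol U
   (the neutral element 1 is only used if no such U exists) *)
Definition conductance (R : realFieldType) (d : 'I_n -> nat) (G : rel 'I_n) : R :=
  \big[Order.min/1]_(U : {set 'I_n} | (0 < vol d U)%N && (vol d U <= nedges G)%N)
     ((\sum_(u in U) lam G U u)%:R / (vol d U)%:R).

(* maximum degree (only used as neutral element for the minimum) *)
Definition dmax (d : 'I_n -> nat) : nat := \big[maxn/0%N]_(u : 'I_n) d u.

Definition dmin (d : 'I_n -> nat) : nat :=
  \big[minn/dmax d]_(u : 'I_n) d u.

Definition opset (x : config) (b : bool) : {set 'I_n} := [set u | x u == b].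

Definition Smin (d : 'I_n -> nat) (x : config) : {set 'I_n} :=
  if (vol d (opset x false) <= vol d (opset x true))%N then opset x false
  else opset x true.

Definition consensus (x : config) : bool := [forall u, forall v, x u == x v].

(* probability that one round of the standard voter model on graph G moves
   configuration x to configuration y: each node independently picks a uniform
   random neighbour and with probability 1/2 adopts its opinion *)
Definition step_prob (R : realFieldType) (G : rel 'I_n) (x y : config) : R :=
  \prod_(u : 'I_n)
     ((1/2) * (y u == x u)%:R
      + (1/2) * #|[set v in nbrs G u | x v == y u]|%:R / #|nbrs G u|%:R).

(* an (adaptive, deterministic) adversary: given the history x_0, ..., x_t of
   configurations it chooses the graph G_t used in the round from x_t to x_{t+1} *)
Definition strategy := seq config -> rel 'I_n.

(* G_t has degrees d and conductance at least phi t, for every history *)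
Definition admissible (R : realFieldType) (d : 'I_n -> nat) (phi : nat -> R)
  (strat : strategy) : Prop :=
  forall h : seq config, (0 < size h)%N ->
    is_dgraph d (strat h) /\ phi (size h).-1 <= conductance R d (strat h).

Definition cdef : config := [ffun _ => false].

Fixpoint cont_prob (R : realFieldType) (strat : strategy) (h c : seq config) : R :=
  match c with
  | [::] => 1
  | y :: c' => step_prob R (strat h) (last cdef h) y * cont_prob R strat (rcons h y) c'
  end.

(* Pr(T <= t + k | history h = (x_0, ..., x_t)) *)
Definition Pr_cons_by (R : realFieldType) (strat : strategy) (h : seq config) (k : nat) : R :=
  \sum_(c : k.-tuple config) cont_prob R strat h c * (has consensus (h ++ c))%:R.

End Voter.

(* Main.v *)
Require Import Defs.
From mathcomp Require Import all_boot all_order all_algebra.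
From mathcomp Require Import ring lra zify.
Set Implicit Arguments. Unset Strict Implicit. Unset Printing Implicit Defensive.
Import Order.TTheory GRing.Theory Num.Theory.
Section S1.
Local Open Scope ring_scope.

Section Prob.
Variables (R : realFieldType) (n : nat) (p : 'I_n -> bool -> R).
Hypothesis hp : forall u, \sum_b p u b = 1.

Definition Ex (g : {ffun 'I_n -> bool} -> R) :=
  \sum_(y : {ffun 'I_n -> bool}) (\prod_u p u (y u)) * g y.

Lemma Ex_prod (f : 'I_n -> bool -> R) :
  Ex (fun y => \prod_u f u (y u)) = \prod_u \sum_b p u b * f u b.
Proof.
rewrite bigA_distr_bigA /Ex; apply: eq_bigr => y _; by rewrite -big_split.
Qed.

Lemma Ex1 : Ex (fun _ => 1) = 1.
Proof.
transitivity (Ex (fun y => \prod_u (fun _ (_ : bool) => (1:R)) u (y u))).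
  by apply: eq_bigr => y _; rewrite big1_eq.
rewrite (Ex_prod (fun _ _ => 1)); apply: big1 => u _.
by rewrite -[X in _ = X](hp u); apply: eq_bigr => b _; rewrite mulr1.
Qed.

Lemma Ex_single u (a : bool -> R) :
  Ex (fun y => a (y u)) = \sum_b p u b * a b.
Proof.
pose f := fun w (c : bool) => if w == u then a c else 1.
transitivity (Ex (fun y => \prod_w f w (y w))).
  apply: eq_bigr => y _; congr (_ * _).
  by rewrite (bigD1 u) //= /f eqxx big1 ?mulr1 // => w /negbTE ->.
rewrite Ex_prod (bigD1 u) //= /f eqxx [X in _ * X = _]big1 ?mulr1 // => w /negbTE wu.
by rewrite wu -[X in _ = X](hp w); apply: eq_bigr => c _; rewrite mulr1.
Qed.

Lemma Ex_pair u v (a b : bool -> R) : u != v ->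
  Ex (fun y => a (y u) * b (y v)) = (\sum_c p u c * a c) * (\sum_c p v c * b c).
Proof.
move=> uv; have vu : (v == u) = false by rewrite eq_sym (negbTE uv).
pose f := fun w (c : bool) => if w == u then a c else if w == v then b c else 1.
transitivity (Ex (fun y => \prod_w f w (y w))).
  apply: eq_bigr => y _; congr (_ * _).
  rewrite (bigD1 u) //= /f eqxx (bigD1 v) //= ?vu ?eqxx //.
  by rewrite big1 ?mulr1 // => w /andP[/negbTE -> /negbTE ->].
rewrite Ex_prod (bigD1 u) //= /f eqxx (bigD1 v) //= ?vu ?eqxx //.
rewrite [X in _ * (_ * X) = _]big1 ?mulr1 // => w /andP[/negbTE wu /negbTE wv].
by rewrite wu wv -[X in _ = X](hp w); apply: eq_bigr => c _; rewrite mulr1.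
Qed.

Lemma Ex_lin (g h : {ffun 'I_n -> bool} -> R) (al be : R) :
  Ex (fun y => al * g y + be * h y) = al * Ex g + be * Ex h.
Proof.
rewrite /Ex !mulr_sumr -big_split; apply: eq_bigr => y _ /=.
set P := \prod_(u < n) _.
ring.
Qed.

Lemma Ex_sum (a : 'I_n -> bool -> R) :
  Ex (fun y => \sum_u a u (y u)) = \sum_u \sum_c p u c * a u c.
Proof.
rewrite /Ex (eq_bigr (fun y : {ffun 'I_n -> bool} => \sum_u (\prod_w p w (y w)) * a u (y u))); last first.
  by move=> y _; rewrite mulr_sumr.
rewrite exchange_big; apply: eq_bigr => u _; exact: Ex_single.
Qed.

Lemma Ex_mul2 (a b : 'I_n -> bool -> R) :
  Ex (fun y => (\sum_u a u (y u)) * (\sum_u b u (y u))) =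
  (\sum_u \sum_c p u c * a u c) * (\sum_u \sum_c p u c * b u c)
  + \sum_u (\sum_c p u c * (a u c * b u c)
            - (\sum_c p u c * a u c) * (\sum_c p u c * b u c)).
Proof.
have E1 : forall u v, Ex (fun y => a u (y u) * b v (y v)) =
   if u == v then \sum_c p u c * (a u c * b u c)
   else (\sum_c p u c * a u c) * (\sum_c p v c * b v c).
  move=> u v; case: eqP => [<-|/eqP uv]; last exact: Ex_pair.
  exact: (Ex_single u (fun c => a u c * b u c)).
rewrite /Ex (eq_bigr (fun y : {ffun 'I_n -> bool} => \sum_u \sum_v (\prod_w p w (y w)) * (a u (y u) * b v (y v)))); last first.
  move=> y _; rewrite mulrA [_ * \sum_u a u _]mulr_sumr mulr_suml; apply: eq_bigr => u _.
  by rewrite mulr_sumr; apply: eq_bigr => v _; rewrite mulrA.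
rewrite exchange_big mulr_suml -big_split; apply: eq_bigr => u _ /=.
rewrite exchange_big.
rewrite (eq_bigr (fun v => if u == v then \sum_c p u c * (a u c * b u c)
   else (\sum_c p u c * a u c) * (\sum_c p v c * b v c))); last first.
  by move=> v _; rewrite -E1.
rewrite mulr_sumr (bigD1 u) //= [X in _ = X + _](bigD1 u) //= eqxx.
rewrite (eq_bigr (fun v => (\sum_c p u c * a u c) * (\sum_c p v c * b v c))); last first.
  by move=> v; rewrite eq_sym => /negbTE ->.
set A := \sum_(i < n | _) _; set B := \sum_c _; set C := \sum_c _; set D := \sum_c _.
ring.
Qed.
End Prob.

End S1.


Lemma card_setE (T : finType) (P : pred T) : #|[set v | P v]| = \sum_v (P v : nat).
Proof. by rewrite -sum1dep_card big_mkcond /=; apply: eq_bigr => v _; case: (P v). Qed.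

Section Graph.
Variables (n : nat) (d : 'I_n -> nat) (G : rel 'I_n).
Hypothesis hG : is_dgraph d G.

Lemma deg_sum u : d u = \sum_v (G u v : nat).
Proof. by case: hG => _ _ <-; rewrite /nbrs card_setE. Qed.

Lemma handshake : \sum_u d u = 2 * nedges G.
Proof.
case: hG => hs hirr _.
have E : forall u v, (G u v : nat) = (G u v && (u < v)%N) + (G u v && (v < u)%N).
  move=> u v; case Guv: (G u v) => //=.
  have : u != v by apply/eqP => uv; subst v; have := hirr u; rewrite Guv.
  by rewrite neq_ltn; case: ltngtP.
rewrite (eq_bigr _ (fun u _ => deg_sum u)).
rewrite (eq_bigr (fun u => \sum_v (G u v && (u < v)%N) + \sum_v (G u v && (v < u)%N))); last first.
  by move=> u _; rewrite -big_split; apply: eq_bigr => v _; exact: E.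
rewrite big_split /= [X in _ + X = _]exchange_big /=.
have -> : \sum_j \sum_i (G i j && (j < i)%N) = \sum_u \sum_v (G u v && (u < v)%N).
  by apply: eq_bigr => u _; apply: eq_bigr => v _; rewrite hs.
rewrite addnn -mul2n; congr (2 * _).
rewrite /nedges card_setE pair_big /=.
by [].
Qed.


Lemma vol_split x b : vol d (opset x b) + vol d (opset x (~~ b)) = \sum_u d u.
Proof.
rewrite /vol (bigID (fun u => x u == b) predT) /=; congr (_ + _); apply: eq_bigl => u;
  rewrite !inE //; by case: (x u); case: b.
Qed.

Definition sbit (x : config n) := ~~ (vol d (opset x false) <= vol d (opset x true))%N.

Lemma Smin_opset x : Smin d x = opset x (sbit x).
Proof. by rewrite /Smin /sbit; case: leqP. Qed.

Lemma Smin_le x b : (vol d (Smin d x) <= vol d (opset x b))%N.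
Proof.
rewrite /Smin; case: (leqP (vol d (opset x false)) (vol d (opset x true))) => h;
  case: b => //; exact: ltnW.
Qed.

Lemma vol_Smin_le_m x : (vol d (Smin d x) <= nedges G)%N.
Proof.
have h1 := Smin_le x (sbit x); have h2 := Smin_le x (~~ sbit x).
have := vol_split x (sbit x); rewrite handshake => e.
lia.
Qed.

End Graph.

Lemma bigminn_le (I : finType) idx (F : I -> nat) u : (\big[minn/idx]_i F i <= F u)%N.
Proof.
have : u \in index_enum I by rewrite mem_index_enum.
elim: (index_enum I) => [|a r IH] //=; rewrite big_cons inE => /orP[/eqP->|/IH h].
  exact: geq_minl.
exact: leq_trans (geq_minr _ _) h.
Qed.

Lemma dmin_le n (d : 'I_n -> nat) u : (dmin d <= d u)%N.
Proof. exact: bigminn_le. Qed.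

Lemma dmin_gt0 n (d : 'I_n -> nat) (u0 : 'I_n) : (forall u, 0 < d u)%N -> (0 < dmin d)%N.
Proof.
move=> dp; have hm : (0 < dmax d)%N.
  by apply: leq_trans (dp u0) _; exact: (@leq_bigmax _ d u0).
move: hm; rewrite /dmin; move: (dmax d) => m hm.
apply: (big_ind (fun k => 0 < k)%N) => //.
- by move=> a b ha hb; rewrite leq_min ha hb.
Qed.

Section Cond.
Variables (R : realFieldType) (n : nat) (d : 'I_n -> nat) (G : rel 'I_n).
Local Open Scope ring_scope.

Lemma cond_ge0 : 0 <= conductance R d G.
Proof.
rewrite /conductance; apply: le_bigmin => // U _.
by apply: divr_ge0; rewrite ler0n.
Qed.

Lemma cond_le1 : conductance R d G <= 1.
Proof. exact: bigmin_le_id. Qed.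

Lemma cond_le U : (0 < vol d U)%N -> (vol d U <= nedges G)%N ->
  conductance R d G <= (\sum_(u in U) lam G U u)%:R / (vol d U)%:R.
Proof.
move=> h1 h2; rewrite /conductance.
exact: (bigmin_le_cond _ (fun U0 : {set 'I_n} => (\sum_(u in U0) lam G U0 u)%:R / (vol d U0)%:R) (introT andP (conj h1 h2))).
Qed.
End Cond.


Section S4.
Local Open Scope ring_scope.

Section Pot.
Variable R : realFieldType.
Definition qf (z : R) := (5 * z - z * z) / 4.
Definition fpot (z : R) := if z <= 1 then qf z else 1.

Lemma fpot_le1 z : fpot z <= 1.
Proof. rewrite /fpot /qf; case: ifPn => h //; nra. Qed.

Lemma fpot_ge0 z : 0 <= z -> 0 <= fpot z.
Proof. rewrite /fpot /qf => h; case: ifPn => h1 //; nra. Qed.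

Lemma fpot_mono z1 z2 : 0 <= z1 -> z1 <= z2 -> fpot z1 <= fpot z2.
Proof.
rewrite /fpot /qf => h1 h2; case: ifPn => h3; case: ifPn => h4; try nra.

Qed.

Lemma fpot_tangent z y0 : 0 <= z -> y0 <= 5/2 ->
  fpot z <= qf y0 + (5/4 - y0/2) * (z - y0).
Proof.
rewrite /fpot /qf => h1 h2; case: ifPn => h3.
  have hh : 0 <= (z - y0) * (z - y0) by rewrite -expr2 sqr_ge0.
  nra.
have h4 : 1 < z by rewrite ltNge h3.
have h5 : 0 <= (5/4 - y0/2) * (z - 1) by apply: mulr_ge0; lra.
have h6 : 0 <= (1 - y0) * (1 - y0) by rewrite -expr2 sqr_ge0.
nra.
Qed.

Lemma fpot_lin z : 0 <= z -> fpot z <= 5/4 * z.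
Proof. rewrite /fpot /qf => h1; case: ifPn => h3; nra. Qed.
End Pot.


Lemma sum_tupleS (R : realFieldType) (T : finType) k (F : seq T -> R) :
  \sum_(c : k.+1.-tuple T) F c = \sum_(y : T) \sum_(c : k.-tuple T) F (y :: c).
Proof.
rewrite (reindex (fun p : T * k.-tuple T => [tuple of p.1 :: p.2])) /=.
  by rewrite -(pair_big predT predT (fun y (c : k.-tuple T) => F (y :: c))).
exists (fun c => (thead c, [tuple of behead c])).
  by case=> y c _ /=; congr (_, _); apply: val_inj.
by move=> c _; rewrite [in RHS](tuple_eta c).
Qed.


Lemma qf_diff (R : realFieldType) (u v : R) : 0 <= v -> v <= u -> qf u - qf v <= 5/4 * (u - v).
Proof. rewrite /qf => h1 h2; nra. Qed.

Lemma final_ineq (R : realFieldType) (W dm b psi VQ : R) : 0 < dm -> dm <= W -> 0 <= psi -> psi <= 1 ->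
  W <= dm / 20 * b -> dm * psi * W / 4 <= VQ ->
  qf (W / (dm / 20 * (b - psi))) - VQ / (4 * (dm / 20 * (b - psi)) ^+ 2) <= qf (W / (dm / 20 * b)).
Proof.
move=> hdm hW hp0 hp1 hWb hV.
have hb : 20 <= b.
  have : dm * 20 <= dm * b by nra.
  by rewrite ler_pM2l.
set b' := b - psi.
have hb' : 19 <= b' by rewrite /b'; lra.
have b'0 : b' != 0 by apply/eqP; lra.
have b0 : b != 0 by apply/eqP; lra.
have dm0 : dm != 0 by apply/eqP; lra.
set u := W / (dm / 20 * b'); set v := W / (dm / 20 * b).
have hv : 0 <= v by rewrite /v; apply: divr_ge0; nra.
have huv : u - v = 20 * W * psi / (dm * b * b').
  by rewrite /u /v /b'; field; rewrite ?mulf_neq0 //; move: b'0 b0 dm0; rewrite /b' => -> -> ->.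
have hvu : v <= u.
  rewrite -subr_ge0 huv; apply: divr_ge0; nra.
have h1 := qf_diff hv hvu.
have h2 : dm * psi * W / 4 / (4 * (dm / 20 * b') ^+ 2) <= VQ / (4 * (dm / 20 * b') ^+ 2).
  by apply: ler_wpM2r => //; rewrite invr_ge0; nra.
have h3 : dm * psi * W / 4 / (4 * (dm / 20 * b') ^+ 2) - 5/4 * (u - v)
          = 25 * W * psi * (b - b') / (dm * b * b' ^+ 2).
  rewrite huv; field; by rewrite b'0 b0 dm0.
have h4 : 0 <= 25 * W * psi * (b - b') / (dm * b * b' ^+ 2).
  apply: divr_ge0.
    have : 0 <= b - b' by rewrite /b'; lra.
    move=> hbb; apply: mulr_ge0 => //; nra.
  have : 0 < b' ^+ 2 by rewrite exprn_gt0 //; lra.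
  nra.
lra.
Qed.

End S4.

Section Part0.

Section Node.
Variables (R : realFieldType) (n : nat) (d : 'I_n -> nat) (G : rel 'I_n) (x : config n).
Hypothesis hG : is_dgraph d G.
Hypothesis dpos : forall u, (0 < d u)%N.

Definition Nb u (c : bool) := #|[set v in nbrs G u | x v == c]|.

Lemma NbE u c : Nb u c = \sum_v (G u v && (x v == c) : nat).
Proof.
rewrite /Nb -(card_setE (fun v => G u v && (x v == c))); apply: eq_card => v.
by rewrite !inE.
Qed.

Lemma Nb_sum u : (Nb u true + Nb u false)%N = d u.
Proof.
rewrite !NbE -big_split (deg_sum hG) /=; apply: eq_bigr => v _.
by case: (G u v); case: (x v).
Qed.

Lemma Nb_le u c : (Nb u c <= d u)%N.
Proof. rewrite -(Nb_sum u); case: c; lia. Qed.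

Local Open Scope ring_scope.

Definition pn u (c : bool) : R := (1/2) * (c == x u)%:R
   + (1/2) * #|[set v in nbrs G u | x v == c]|%:R / #|nbrs G u|%:R.

Lemma card_nbrs u : #|nbrs G u| = d u.
Proof. by case: hG => _ _ ->. Qed.

Lemma d0 u : (d u)%:R != 0 :> R.
Proof. by rewrite pnatr_eq0 -lt0n dpos. Qed.

Lemma pn_sum u : \sum_c pn u c = 1.
Proof.
rewrite big_bool /pn card_nbrs -/(Nb u true) -/(Nb u false).
have h := Nb_sum u; have hd := d0 u.
have -> : (Nb u false)%:R = (d u)%:R - (Nb u true)%:R :> R.
  by rewrite -h natrD addrC addKr.
case: (x u) => /=; field => //.
Qed.

Lemma pn_ge0 u c : 0 <= pn u c.
Proof.
rewrite /pn; apply: addr_ge0; first by apply: mulr_ge0; rewrite ?ler0n // ; lra.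
by rewrite -mulrA; apply: mulr_ge0; [lra | apply: divr_ge0; rewrite ler0n].
Qed.

Lemma pn_neq u c : c != x u -> (d u)%:R * pn u c = (Nb u c)%:R / 2.
Proof.
move=> /negbTE h; rewrite /pn h card_nbrs -/(Nb u c) /=.
have hd := d0 u; field => //.
Qed.


Variable be : bool.

Definition aQ u (c : bool) : R := if x u == be then (d u)%:R * (c != be)%:R else 0.
Definition aP u (c : bool) : R := if x u == be then 0 else (d u)%:R * (c == be)%:R.

Lemma EaQ u : \sum_c pn u c * aQ u c = if x u == be then (Nb u (~~ be))%:R / 2 else 0.
Proof.
rewrite /aQ; case: eqP => [xu|_]; last by rewrite big1 // => c _; rewrite mulr0.
have := pn_neq (u := u) (c := ~~ be); rewrite xu; case: be xu => xu /(_ isT) h;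
  rewrite big_bool /= ?mulr0 ?mulr1 ?addr0 ?add0r mulrC //.
Qed.

Lemma EaQ2 u : \sum_c pn u c * (aQ u c * aQ u c) =
   if x u == be then (d u)%:R * (Nb u (~~ be))%:R / 2 else 0.
Proof.
rewrite /aQ; case: eqP => [xu|_]; last by rewrite big1 // => c _; rewrite !mulr0.
have := pn_neq (u := u) (c := ~~ be); rewrite xu; case: be xu => xu /(_ isT) /= h;
  rewrite big_bool /= -[RHS]mulrA -h; set P1 := pn u true; set P2 := pn u false; ring.
Qed.

Lemma EaP u : \sum_c pn u c * aP u c = if x u == be then 0 else (Nb u be)%:R / 2.
Proof.
rewrite /aP; case: eqP => [_|xu]; first by rewrite big1 // => c _; rewrite mulr0.
have xu' : be != x u by apply/eqP => e; apply: xu; rewrite e.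
have := pn_neq xu'; case: be xu xu' => xu xu' h;
  rewrite big_bool /= ?mulr0 ?mulr1 ?addr0 ?add0r mulrC //.
Qed.

Lemma EaQP u : \sum_c pn u c * (aQ u c * aP u c) = 0.
Proof. by apply: big1 => c _; rewrite /aQ /aP; case: (x u == be); rewrite ?mul0r ?mulr0. Qed.

Lemma EaQEaP u : (\sum_c pn u c * aQ u c) * (\sum_c pn u c * aP u c) = 0.
Proof. by rewrite EaQ EaP; case: eqP => _; rewrite ?mulr0 ?mul0r. Qed.

Definition LQ := (\sum_u (if x u == be then Nb u (~~ be) else 0))%N.
Definition LP := (\sum_u (if x u == be then 0 else Nb u be))%N.

Lemma LQ_LP : LQ = LP.
Proof.
case: hG => hs _ _.
rewrite /LQ /LP.
rewrite (eq_bigr (fun u => \sum_v ((x u == be) && G u v && (x v != be) : nat))); last first.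
  move=> u _; rewrite NbE; case: eqP => _ /=; last by rewrite big1.
  by apply: eq_bigr => v _; case: (x v); case: be.
rewrite [RHS](eq_bigr (fun u => \sum_v ((x u != be) && G u v && (x v == be) : nat))); last first.
  move=> u _; rewrite NbE; case: eqP => _ /=; first by rewrite big1.
  by apply: eq_bigr => v _.
rewrite [RHS]exchange_big; apply: eq_bigr => u _; apply: eq_bigr => v _.
by rewrite hs; case: (x u == be); case: (x v == be); case: (G v u).
Qed.

Lemma EQsum : \sum_u \sum_c pn u c * aQ u c = (LQ%:R) / 2.
Proof.
rewrite /LQ natr_sum mulr_suml; apply: eq_bigr => u _; rewrite EaQ.
by case: eqP; rewrite ?mul0r.
Qed.

Lemma EPsum : \sum_u \sum_c pn u c * aP u c = (LQ%:R) / 2.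
Proof.
rewrite LQ_LP /LP natr_sum mulr_suml; apply: eq_bigr => u _; rewrite EaP.
by case: eqP; rewrite ?mul0r.
Qed.

Definition VQ := \sum_u (\sum_c pn u c * (aQ u c * aQ u c) - (\sum_c pn u c * aQ u c) ^+ 2).

Lemma VQ_ge : (dmin d)%:R * LQ%:R / 4 <= VQ.
Proof.
rewrite /VQ /LQ natr_sum mulr_sumr mulr_suml; apply: ler_sum => u _.
rewrite EaQ2 EaQ; case: eqP => _; last by rewrite mulr0 mul0r expr0n /= subr0.
have h1 := Nb_le u (~~ be); have h2 := dmin_le d u.
have h1' : (Nb u (~~ be))%:R <= (d u)%:R :> R by rewrite ler_nat.
have h2' : (dmin d)%:R <= (d u)%:R :> R by rewrite ler_nat.
have h3 : 0 <= (Nb u (~~ be))%:R :> R by rewrite ler0n.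
nra.
Qed.

End Node.

End Part0.

Section Part1.
Local Open Scope ring_scope.

Section Node2.
Variables (R : realFieldType) (n : nat) (d : 'I_n -> nat) (G : rel 'I_n) (x : config n).
Hypothesis hG : is_dgraph d G.
Hypothesis dpos : forall u, (0 < d u)%N.
Variable be : bool.

Let p := pn R G x.
Let hp : forall u, \sum_c p u c = 1 := pn_sum R x hG dpos.

Definition Qy (y : config n) : R := \sum_u aQ R d x be u (y u).
Definition Py (y : config n) : R := \sum_u aP R d x be u (y u).

Lemma vol_dec y : (vol d (opset y be))%:R = (vol d (opset x be))%:R + Py y - Qy y :> R.
Proof.
rewrite /vol !natr_sum big_mkcond [X in _ = X + _ - _]big_mkcond /Py /Qy -big_split -sumrB /=; apply: eq_bigr => u _.
rewrite /aP /aQ !inE; case: (x u); case: (y u); case: be => /=;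
  rewrite ?mulr0 ?mulr1 ?addr0 ?add0r ?subr0 ?sub0r ?subrr ?oppr0 //.
Qed.

Lemma EQ : Ex p Qy = (LQ G x be)%:R / 2.
Proof. by rewrite /Qy (Ex_sum hp) (EQsum R x hG dpos be). Qed.

Lemma EP : Ex p Py = (LQ G x be)%:R / 2.
Proof. by rewrite /Py (Ex_sum hp) (EPsum R x hG dpos be). Qed.

Lemma EQQ : Ex p (fun y => Qy y * Qy y) = ((LQ G x be)%:R / 2) ^+ 2 + VQ R d G x be.
Proof. by rewrite /Qy (Ex_mul2 hp) (EQsum R x hG dpos be) expr2. Qed.

Lemma EQP : Ex p (fun y => Qy y * Py y) = ((LQ G x be)%:R / 2) ^+ 2.
Proof.
rewrite /Qy /Py (Ex_mul2 hp) (EQsum R x hG dpos be) (EPsum R x hG dpos be) expr2 big1 ?addr0 // => u _.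
by rewrite (EaQP R d G x be) (EaQEaP R x hG dpos be) subrr.
Qed.

Lemma Qy_ge0 y : 0 <= Qy y.
Proof.
apply: sumr_ge0 => u _; rewrite /aQ; case: eqP => _ //.
by apply: mulr_ge0; rewrite ler0n.
Qed.

End Node2.

End Part1.

Section Part2.
Local Open Scope ring_scope.

Lemma Ex_poly (R : realFieldType) n (p : 'I_n -> bool -> R) (X Y Z U : config n -> R) k0 k1 k2 k3 k4 :
  Ex p (fun y => k0 + k1 * X y + k2 * Y y + k3 * Z y + k4 * U y) =
  k0 * Ex p (fun _ => 1) + k1 * Ex p X + k2 * Ex p Y + k3 * Ex p Z + k4 * Ex p U.
Proof.
rewrite /Ex !mulr_sumr -!big_split; apply: eq_bigr => y _ /=.
set P := \prod_(u < n) _; ring.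
Qed.

Lemma Ex_le (R : realFieldType) n (p : 'I_n -> bool -> R) (F1 F2 : config n -> R) :
  (forall u c, 0 <= p u c) -> (forall y, F1 y <= F2 y) -> Ex p F1 <= Ex p F2.
Proof.
move=> hp hF; apply: ler_sum => y _; apply: ler_wpM2l; last exact: hF.
by apply: prodr_ge0 => u _.
Qed.

Definition Fpot (R : realFieldType) n (d : 'I_n -> nat) (z : config n) (b : R) : R :=
  if b <= 0 then 1 else fpot ((vol d (Smin d z))%:R / ((dmin d)%:R / 20 * b)).

Lemma Fpot_le1 (R : realFieldType) n (d : 'I_n -> nat) z (b : R) : Fpot d z b <= 1.
Proof. rewrite /Fpot; case: ifP => // _; exact: fpot_le1. Qed.

Lemma Fpot_ge0 (R : realFieldType) n (d : 'I_n -> nat) z (b : R) : 0 <= Fpot d z b.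
Proof.
rewrite /Fpot; case: ifPn => //; rewrite -ltNge => hb; apply: fpot_ge0.
apply: divr_ge0; first by rewrite ler0n.
by apply: mulr_ge0; [apply: divr_ge0; rewrite ?ler0n | exact: ltW].
Qed.

Section Step.
Variables (R : realFieldType) (n : nat) (d : 'I_n -> nat) (G : rel 'I_n) (x : config n).
Hypothesis hG : is_dgraph d G.
Hypothesis dpos : forall u, (0 < d u)%N.

Let p := pn R G x.
Let hp : forall u, \sum_c p u c = 1 := pn_sum R x hG dpos.
Let p0 : forall u c, 0 <= p u c := pn_ge0 R G x.

Lemma stepE (F : config n -> R) : \sum_y step_prob R G x y * F y = Ex p F.
Proof. by []. Qed.

Lemma Ex_le1 (F : config n -> R) : (forall y, F y <= 1) -> Ex p F <= 1.
Proof. by move=> h; rewrite -(Ex1 hp); apply: Ex_le. Qed.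

Lemma LQ_lam be : \sum_(u in opset x be) lam G (opset x be) u = LQ G x be.
Proof.
rewrite /LQ big_mkcond; apply: eq_bigr => u _; rewrite inE; case: eqP => // xu.
rewrite /lam /Nb; apply: eq_card => v; rewrite !inE; congr (_ && _).
by rewrite -xu; case: (x v); case: (x u).
Qed.

Lemma LQ_le be : (LQ G x be <= vol d (opset x be))%N.
Proof.
rewrite /LQ /vol [X in (_ <= X)%N]big_mkcond /=; apply: leq_sum => u _; rewrite inE.
by case: eqP => // _; exact: (Nb_le x hG).
Qed.


Lemma step_ineq (psi b : R) : ~~ consensus x -> 0 <= psi -> psi <= conductance R d G ->
  \sum_y step_prob R G x y * Fpot d y (b - psi) <= Fpot d x b.
Proof.
move=> hx hp0 hpc; rewrite stepE.
have triv : Ex p (fun y => Fpot d y (b - psi)) <= 1 by apply: Ex_le1 => y; exact: Fpot_le1.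
rewrite [in X in _ <= X]/Fpot; case: ifPn => [_|]; first exact: triv.
rewrite -ltNge => b0.
set be := sbit d x; rewrite (Smin_opset d x) -/be.
set W := vol d (opset x be).
set dm := dmin d.
have hpsi1 : psi <= 1 := le_trans hpc (cond_le1 R d G).
have [u1 [u2 h12]] : exists u1 u2, x u1 != x u2.
  move: hx; rewrite /consensus negb_forall => /existsP [u1]; rewrite negb_forall => /existsP [u2 h].
  by exists u1, u2.
have ex : forall c : bool, exists u, x u == c.
  move=> c; case: (boolP (x u1 == c)) => h; [by exists u1 | exists u2; move: h12 h].
  by case: (x u1); case: (x u2); case: c.
have [u xu] := ex be.
have dm0 : (0 < dm)%N by apply: (dmin_gt0 u) dpos.
have hWd : (dm <= W)%N.
  apply: leq_trans (dmin_le d u) _; rewrite /W /vol (bigD1 u) ?inE //=; exact: leq_addr.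
have dmR : 0 < dm%:R :> R by rewrite ltr0n.
have WdR : dm%:R <= W%:R :> R by rewrite ler_nat.
rewrite [X in _ <= X]/fpot -/dm -/W; case: ifPn => ht; last first.
  by apply: triv.
have hWb : W%:R <= dm%:R / 20 * b.
  by move: ht; rewrite ler_pdivrMr ?mul1r //; apply: mulr_gt0 => //; apply: divr_gt0.
have hb20 : 20 <= b.
  have : dm%:R * 20 <= dm%:R * b :> R by nra.
  by rewrite ler_pM2l.
have hb' : 0 < b - psi by lra.
set cc := dm%:R / 20 * (b - psi).
have cc0 : 0 < cc by apply: mulr_gt0 => //; apply: divr_gt0.
have ccn0 : cc != 0 by rewrite gt_eqF.
set L := LQ G x be.
set c0 : R := L%:R / 2.
have hLW : (L <= W)%N := LQ_le be.
have hLWr : L%:R <= W%:R :> R by rewrite ler_nat.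
have hWpos : (0 < W)%N by apply: leq_trans dm0 hWd.
have hcondL : psi * W%:R <= L%:R.
  have hm : (vol d (opset x be) <= nedges G)%N by rewrite /be -Smin_opset; exact: vol_Smin_le_m hG x.
  have hc := cond_le R (G := G) (U := opset x be) hWpos hm.
  move: hc; rewrite (LQ_lam be) => hc.
  have hWr : 0 < W%:R :> R by rewrite ltr0n.
  have : conductance R d G * W%:R <= L%:R by rewrite -ler_pdivlMr.
  nra.
pose y0 y := (W%:R + c0 - Qy R d x be y) / cc.
pose T y := qf (y0 y) + (5/4 - y0 y / 2) * ((Py R d x be y - c0) / cc).
have hT : forall y, Fpot d y (b - psi) <= T y.
  move=> y; rewrite /Fpot; case: ifPn => [hle|_]; first by exfalso; lra.
  have hV := vol_dec R d x be y.
  have hM := Smin_le d y be.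
  set M := vol d (Smin d y) in hM *; set V := vol d (opset y be) in hV hM.
  have hMV : M%:R / cc <= V%:R / cc by rewrite ler_pM2r ?invr_gt0 // ler_nat.
  have hM0 : 0 <= M%:R / cc by apply: divr_ge0; rewrite ?ler0n // ltW.
  apply: le_trans (fpot_mono hM0 hMV) _.
  have hy0 : y0 y <= 5/2.
    rewrite /y0 ler_pdivrMr //.
    have := Qy_ge0 R d x be y; rewrite /cc /c0; nra.
  have hV0 : 0 <= V%:R / cc by apply: divr_ge0; rewrite ?ler0n // ltW.
  apply: le_trans (fpot_tangent hV0 hy0) _.
  rewrite /T hV le_eqVlt; apply/orP; left; apply/eqP; congr (_ + _ * _); rewrite /y0; field; exact: ccn0.
apply: le_trans (Ex_le p0 hT) _.
set k0 := 5 * (W%:R + c0) / (4 * cc) - (W%:R + c0) ^+ 2 / (4 * cc ^+ 2) - 5 * c0 / (4 * cc)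
          + (W%:R + c0) * c0 / (2 * cc ^+ 2).
set k1 := - 5 / (4 * cc) + (W%:R + c0) / (2 * cc ^+ 2) - c0 / (2 * cc ^+ 2).
set k2 := 5 / (4 * cc) - (W%:R + c0) / (2 * cc ^+ 2).
set k3 := - 1 / (4 * cc ^+ 2).
set k4 := 1 / (2 * cc ^+ 2).
have eT : Ex p T = Ex p (fun y => k0 + k1 * Qy R d x be y + k2 * Py R d x be y
           + k3 * (Qy R d x be y * Qy R d x be y) + k4 * (Qy R d x be y * Py R d x be y)).
  apply: eq_bigr => y _; congr (_ * _); rewrite /T /y0 /qf /k0 /k1 /k2 /k3 /k4; field; exact: ccn0.
rewrite eT Ex_poly (Ex1 hp) (EQ R x hG dpos) (EP R x hG dpos) (EQQ R x hG dpos) (EQP R x hG dpos) -/L -/c0.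
have VQge := VQ_ge R x hG dpos be.
set VQv := VQ R d G x be in VQge *.
have eq2 : k0 * 1 + k1 * c0 + k2 * c0 + k3 * (c0 ^+ 2 + VQv) + k4 * c0 ^+ 2
           = qf (W%:R / cc) - VQv / (4 * cc ^+ 2).
  rewrite /k0 /k1 /k2 /k3 /k4 /qf; field; exact: ccn0.
rewrite eq2.
apply: final_ineq => //.
apply: le_trans VQge; rewrite -/dm.
have : dm%:R * (psi * W%:R) <= dm%:R * L%:R :> R by rewrite ler_pM2l.
lra.
Qed.

End Step.

End Part2.

Section Part3.
Local Open Scope ring_scope.

Section Rec.
Variables (R : realFieldType) (n : nat) (strat : strategy n).

Definition Zc (h : seq (config n)) k : R :=
  \sum_(c : k.-tuple (config n)) cont_prob R strat h c * (~~ has (@consensus n) (h ++ c))%:R.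

Lemma step_ge0 (G : rel 'I_n) (x y : config n) : 0 <= step_prob R G x y.
Proof. by apply: prodr_ge0 => u _; exact: (pn_ge0 R G x u (y u)). Qed.

Lemma cont_ge0 h c : 0 <= cont_prob R strat h c.
Proof.
elim: c h => [|y c IH] h /=; first exact: ler01.
by apply: mulr_ge0; [exact: step_ge0 | exact: IH].
Qed.

Lemma Zc_S h k : Zc h k.+1 =
  \sum_y step_prob R (strat h) (last (cdef n) h) y * Zc (rcons h y) k.
Proof.
rewrite /Zc (@sum_tupleS _ _ _ (fun s => cont_prob R strat h s * (~~ has (@consensus n) (h ++ s))%:R)).
apply: eq_bigr => y _; rewrite mulr_sumr; apply: eq_bigr => c _ /=.
by rewrite -cat_rcons mulrA.
Qed.

Lemma Zc_cons h k : has (@consensus n) h -> Zc h k = 0.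
Proof. by move=> hc; apply: big1 => c _; rewrite has_cat hc /= mulr0. Qed.

Hypothesis hstep : forall h, (0 < size h)%N -> \sum_y step_prob R (strat h) (last (cdef n) h) y = 1.

Lemma sum_cont k h : (0 < size h)%N -> \sum_(c : k.-tuple (config n)) cont_prob R strat h c = 1.
Proof.
elim: k h => [|k IH] h hs.
  rewrite (big_pred1 [tuple]) // => c; rewrite /pred1 /=; apply/esym/eqP; exact: tuple0.
rewrite (@sum_tupleS _ _ _ (fun s => cont_prob R strat h s)) /= -(hstep hs).
apply: eq_bigr => y _; rewrite -mulr_sumr IH ?mulr1 //.
by rewrite size_rcons.
Qed.

Lemma Pr_Zc h k : (0 < size h)%N -> Pr_cons_by R strat h k = 1 - Zc h k.
Proof.
move=> hs; rewrite /Pr_cons_by /Zc -[X in X - _](sum_cont k hs) -sumrB; apply: eq_bigr => c _.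
by case: (has (@consensus n) (h ++ c)) => /=; rewrite ?mulr0 ?mulr1 ?subr0 ?subrr.
Qed.

Lemma Zc_le1 h k : (0 < size h)%N -> Zc h k <= 1.
Proof.
move=> hs; rewrite -[X in _ <= X](sum_cont k hs); apply: ler_sum => c _.
by have := cont_ge0 h c; case: (has (@consensus n) (h ++ c)) => /=; rewrite ?mulr1 ?mulr0.
Qed.

End Rec.

Section Bound.
Variables (R : realFieldType) (n : nat) (d : 'I_n -> nat) (strat : strategy n) (psi : nat -> R).
Hypothesis dpos : forall u, (0 < d u)%N.
Hypothesis hs : forall h, (0 < size h)%N -> is_dgraph d (strat h) /\
   0 <= psi (size h).-1 /\ psi (size h).-1 <= conductance R d (strat h).

Lemma hstep' h : (0 < size h)%N ->
  \sum_y step_prob R (strat h) (last (cdef n) h) y = 1.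
Proof.
move=> hh; have [hG _] := hs hh.
rewrite -(Ex1 (pn_sum R (last (cdef n) h) hG dpos)); apply: eq_bigr => y _.
by rewrite mulr1.
Qed.

Lemma last_in (h : seq (config n)) : (0 < size h)%N -> last (cdef n) h \in h.
Proof. by case: h => // a s _; exact: (mem_last a s). Qed.

Lemma Zc_bound k : forall h t, size h = t.+1 ->
  Zc R strat h k <= Fpot d (last (cdef n) h) (\sum_(t <= i < t + k) psi i).
Proof.
elim: k => [|k IH] h t hsz.
  rewrite addn0 big_geq // /Fpot lexx; apply: Zc_le1; last by rewrite hsz.
  exact: hstep'.
have hh : (0 < size h)%N by rewrite hsz.
case: (boolP (has (@consensus n) h)) => hc.
  by rewrite Zc_cons //; exact: Fpot_ge0.
have hx : ~~ consensus (last (cdef n) h).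
  by apply: contra hc => hl; apply/hasP; exists (last (cdef n) h) => //; exact: last_in.
have [hG [hp0 hpc]] := hs hh.
rewrite hsz /= in hp0 hpc.
rewrite Zc_S.
have eb : \sum_(t <= i < t + k.+1) psi i - psi t = \sum_(t.+1 <= i < t.+1 + k) psi i.
  have -> : (t + k.+1 = t.+1 + k)%N by rewrite addSnnS.
  rewrite big_ltn; last by rewrite addSn ltnS leq_addr.
  by rewrite addrAC subrr add0r.
apply: le_trans (step_ineq hG dpos (\sum_(t <= i < t + k.+1) psi i) hx hp0 hpc).
apply: ler_sum => y _; rewrite eb; apply: ler_wpM2l; first exact: step_ge0.
by have := IH (rcons h y) t.+1; rewrite size_rcons hsz last_rcons; apply.
Qed.

End Bound.

End Part3.

Section Part4.
Local Open Scope ring_scope.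

Lemma Smin_ge n (d : 'I_n -> nat) (x : config n) : (forall u, 0 < d u)%N ->
  ~~ consensus x -> (0 < dmin d)%N /\ (dmin d <= vol d (Smin d x))%N.
Proof.
move=> dpos hx.
have [u1 [u2 h12]] : exists u1 u2, x u1 != x u2.
  move: hx; rewrite /consensus negb_forall => /existsP [u1]; rewrite negb_forall => /existsP [u2 h].
  by exists u1, u2.
have ex : forall c : bool, exists u, x u == c.
  move=> c; case: (boolP (x u1 == c)) => h; [by exists u1 | exists u2; move: h12 h].
  by case: (x u1); case: (x u2); case: c.
have [u xu] := ex (sbit d x).
split; first exact: (dmin_gt0 u) dpos.
apply: leq_trans (dmin_le d u) _; rewrite Smin_opset /vol (bigD1 u) ?inE //=; exact: leq_addr.
Qed.

Lemma final_gen (R : realFieldType) n (d : 'I_n -> nat) (strat : strategy n) (psi : nat -> R) :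
  (forall u, 0 < d u)%N ->
  (forall h, (0 < size h)%N -> is_dgraph d (strat h) /\
   0 <= psi (size h).-1 /\ psi (size h).-1 <= conductance R d (strat h)) ->
  forall h t k, size h = t.+1 ->
  (~~ consensus (last (cdef n) h) ->
    128 * (vol d (Smin d (last (cdef n) h)))%:R / (dmin d)%:R <= \sum_(t <= i < t + k) psi i) ->
  1/2 <= Pr_cons_by R strat h k.
Proof.
move=> dpos hs h t k hsz hB.
have hh : (0 < size h)%N by rewrite hsz.
rewrite (Pr_Zc (hstep' dpos hs) k hh).
case: (boolP (consensus (last (cdef n) h))) => hc.
  rewrite Zc_cons; first lra.
  by apply/hasP; exists (last (cdef n) h) => //; exact: last_in.
have := Zc_bound dpos hs k hsz; have := hB hc.
have [dm0 hMd] := Smin_ge dpos hc.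
set M := vol d (Smin d (last (cdef n) h)) in hMd *.
set b := \sum_(t <= i < t + k) psi i.
set dm := dmin d in dm0 hMd *.
move=> hb hZ.
have dmR : 0 < dm%:R :> R by rewrite ltr0n.
have MdR : dm%:R <= M%:R :> R by rewrite ler_nat.
have hb' : 128 * M%:R <= b * dm%:R by move: hb; rewrite ler_pdivrMr.
have bpos : 0 < b by nra.
move: hZ; rewrite /Fpot; case: ifPn => [hle|_]; first by move: bpos; rewrite ltNge hle.
have D0 : 0 < dm%:R / 20 * b by apply: mulr_gt0 => //; apply: divr_gt0.
have r0 : 0 <= M%:R / (dm%:R / 20 * b) by apply: divr_ge0; rewrite ?ler0n // ltW.
have hr : M%:R / (dm%:R / 20 * b) <= 20 / 128.
  rewrite ler_pdivrMr //; nra.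
have := fpot_lin r0; clear dm0 hMd hsz hh hB hs.
lra.
Qed.

End Part4.

Unset Implicit Arguments.
Local Open Scope ring_scope.

Theorem lemma2 (R : realFieldType) (n : nat) (d : 'I_n -> nat)
  (d_pos : forall u, (0 < d u)%N) :
  (* dynamic graphs with conductance lower bounds phi *)
  (forall (phi : nat -> R) (strat : strategy n),
     admissible d phi strat ->
     forall (that : nat) (h : seq (config n)), size h = that.+1 ->
     forall tau : nat,
       let X := 129 * (vol d (Smin d (last (cdef n) h)))%:R / (dmin d)%:R in
       X <= \sum_(that <= i < that + tau.+1) phi i ->
       (forall tau' : nat, (tau' < tau)%N ->
          \sum_(that <= i < that + tau'.+1) phi i < X) ->
       1/2 <= Pr_cons_by R strat h tau)
  /\
  (* static graph with conductance phi *)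
  (forall G : rel 'I_n, is_dgraph d G -> 0 < conductance R d G ->
     forall (that : nat) (h : seq (config n)), size h = that.+1 ->
     forall N : nat,
       let B := that%:R + 129 * (vol d (Smin d (last (cdef n) h)))%:R
                          / (conductance R d G * (dmin d)%:R) in
       N%:R <= B < N.+1%:R ->
       1/2 <= Pr_cons_by R (fun _ => G) h (N - that)).
Proof.
split.
- move=> phi strat adm that h hsz tau X hX _.
  pose psi := fun i => if 0 <= phi i then phi i else 0.
  have hs : forall h, (0 < size h)%N -> is_dgraph d (strat h) /\
      0 <= psi (size h).-1 /\ psi (size h).-1 <= conductance R d (strat h).
    move=> h' hh; have [hG hc] := adm h' hh; split => //.
    rewrite /psi; case: ifPn => hp; split => //; exact: cond_ge0.
  apply: (final_gen d_pos hs hsz) => hc.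
  have [dm0 hMd] := Smin_ge d_pos hc.
  set M := vol d (Smin d (last (cdef n) h)) in hMd X hX *.
  set dm := dmin d in dm0 hMd X hX *.
  have dmR : 0 < dm%:R :> R by rewrite ltr0n.
  have MdR : dm%:R <= M%:R :> R by rewrite ler_nat.
  have h1 : 1 <= M%:R / dm%:R :> R by rewrite ler_pdivlMr // mul1r.
  have hlast : phi (that + tau)%N <= 1.
    have hh : (0 < size (nseq (that + tau).+1 (cdef n)))%N by rewrite size_nseq.
    have [_ hc'] := adm _ hh; rewrite size_nseq /= in hc'.
    exact: le_trans hc' (cond_le1 R d _).
  have hsplit : \sum_(that <= i < that + tau.+1) phi i
      = \sum_(that <= i < that + tau) phi i + phi (that + tau)%N.
    by rewrite addnS big_nat_recr // leq_addr.
  have hpp : \sum_(that <= i < that + tau) phi i <= \sum_(that <= i < that + tau) psi i.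
    apply: ler_sum => i _; rewrite /psi; case: ifPn => //; rewrite -ltNge => /ltW //.
  move: hX; rewrite /X hsplit => hX.
  have e : 128 * M%:R / dm%:R = 129 * M%:R / dm%:R - M%:R / dm%:R :> R by ring.
  rewrite e; clear dm0 hMd hsz e; lra.
- move=> G hG hc0 that h hsz N B /andP [hN1 hN2].
  pose psi := fun _ : nat => conductance R d G.
  have hs : forall h : seq (config n), (0 < size h)%N -> is_dgraph d ((fun _ => G) h) /\
      0 <= psi (size h).-1 /\ psi (size h).-1 <= conductance R d ((fun _ => G) h).
    by move=> h' hh; split => //; split; [exact: cond_ge0 | rewrite /psi].
  apply: (@final_gen R n d (fun _ => G) psi d_pos hs h that (N - that) hsz) => hc.
  have [dm0 hMd] := Smin_ge d_pos hc.
  set M := vol d (Smin d (last (cdef n) h)) in hMd B hN1 hN2 *.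
  set dm := dmin d in dm0 hMd B hN1 hN2 *.
  set phi := conductance R d G in hc0 B hN1 hN2 psi hs *.
  have dmR : 0 < dm%:R :> R by rewrite ltr0n.
  have MdR : dm%:R <= M%:R :> R by rewrite ler_nat.
  have h1 : 1 <= M%:R / dm%:R :> R by rewrite ler_pdivlMr // mul1r.
  have phi1 : phi <= 1 by exact: cond_le1.
  have hQ : 0 <= 129 * M%:R / (phi * dm%:R).
    by apply: divr_ge0; [apply: mulr_ge0; rewrite ?ler0n | apply: mulr_ge0; [exact: ltW | rewrite ler0n]].
  have htN : (that <= N)%N.
    have : that%:R < N.+1%:R :> R by rewrite /B in hN2; lra.
    by rewrite ltr_nat ltnS.
  rewrite /psi sumr_const_nat addKn -[X in _ <= X]mulr_natl natrB //.
  have e : 129 * M%:R / (phi * dm%:R) = (129 * (M%:R / dm%:R)) / phi.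
    by field; apply/andP; split; rewrite ?gt_eqF.
  move: hN2; rewrite /B e => hN2.
  set r := M%:R / dm%:R in h1 hN2 *.
  have e2 : 128 * M%:R / dm%:R = 128 * r :> R by rewrite /r mulrA.
  rewrite e2.
  have hN2' : (129 * r) / phi < (N.+1)%:R - that%:R by lra.
  have : 129 * r < ((N.+1)%:R - that%:R) * phi by rewrite -ltr_pdivrMr.
  rewrite -addn1 natrD => hh.
  clear dm0 hMd hsz htN hs; nra.
Qed.
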